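(* Let $(\Omega,\mathcal F)$ be a measurable space, $\mathcal X$ the set of bounded measurable functions, $w$ a continuous capacity, and $\alpha\in(0,1)$. If $\mathrm{ES}^w_\alpha$ is a coherent risk measure, then $$\mathrm{ES}^w_\alpha(X)=\sup\Big\{\mathbb E^{\mathbb Q}[X]:\mathbb Q\in\mathcal P_0,\ \mathbb Q(A)\le w(A)/\alpha\ \text{for all }A\in\mathcal F\Big\},\qquad X\in\mathcal X,$$ where $\mathcal P_0$ is the set of all (countably additive) probability measures on $(\Omega,\mathcal F)$.
   Context: A capacity is an increasing function $w:\mathcal F\to\mathbb R$ with $w(\varnothing)=0$, $w(\Omega)=1$; it is continuous if $w(A_n)\to0$ whenever $A_n\in\mathcal F$ decrease to $\varnothing$. $\mathrm{VaR}^w_t(X)=\inf\{x\in\mathbb R:w(X\ge x)\le t\}$ and $\mathrm{ES}^w_\alpha(X)=\frac1\alpha\int_0^\alpha\mathrm{VaR}^w_t(X)\,\mathrm dt$. A coherent risk measure is a mapping $\mathcal X\to\mathbb R$ that is monotone, translation invariant ($\mathcal R(X+c)=\mathcal R(X)+c$), positively homogeneous and convex. *)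

(* Defs.v *)
From HB Require Import structures.
From mathcomp Require Import all_boot all_order all_algebra.
From mathcomp Require Import all_classical all_reals all_analysis.
Set Implicit Arguments. Unset Strict Implicit. Unset Printing Implicit Defensive.
Import Order.TTheory GRing.Theory Num.Theory.
Import numFieldNormedType.Exports.
Local Open Scope classical_set_scope.
Local Open Scope ring_scope.

Section defs.
Context {d : measure_display} {T : measurableType d} {R : realType}.

Definition bdd_meas (X : T -> R) : Prop :=
  measurable_fun setT X /\ exists M : R, forall t, `|X t| <= M.

Definition capacity (w : set T -> R) : Prop :=
  [/\ w set0 = 0, w setT = 1 &
      forall A B, measurable A -> measurable B -> A `<=` B -> w A <= w B].

Definition continuous_capacity (w : set T -> R) : Prop :=
  capacity w /\
  forall A : nat -> set T, (forall n, measurable (A n)) ->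
    (forall n, A n.+1 `<=` A n) -> \bigcap_n A n = set0 ->
    w (A n) @[n --> \oo] --> (0 : R).

Definition VaR (w : set T -> R) (t : R) (X : T -> R) : R :=
  inf [set x : R | w [set om | x <= X om] <= t].

Definition ES (w : set T -> R) (alpha : R) (X : T -> R) : R :=
  (Rintegral lebesgue_measure `]0, alpha[ (fun t => VaR w t X)) / alpha.

Definition coherent (rho : (T -> R) -> R) : Prop :=
  [/\ (forall X Y, bdd_meas X -> bdd_meas Y -> (forall t, X t <= Y t) ->
          rho X <= rho Y),
      (forall X (c : R), bdd_meas X -> rho (fun t => X t + c) = rho X + c),
      (forall X (l : R), bdd_meas X -> 0 < l -> rho (fun t => l * X t) = l * rho X) &
      (forall X Y (l : R), bdd_meas X -> bdd_meas Y -> 0 <= l <= 1 ->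
          rho (fun t => l * X t + (1 - l) * Y t) <= l * rho X + (1 - l) * rho Y)].
End defs.

(* Main.v *)
Require Import Defs.
From HB Require Import structures.
From mathcomp Require Import all_boot all_order all_algebra.
From mathcomp Require Import all_classical all_reals all_analysis.
From mathcomp Require Import ring lra measurable_realfun.
Import Order.TTheory GRing.Theory Num.Theory.
Import numFieldNormedType.Exports.
Local Open Scope classical_set_scope.
Local Open Scope ring_scope.

Set Implicit Arguments. Unset Strict Implicit. Unset Printing Implicit Defensive.


Section HahnBanach.
Variables (T : Type) (R : realType) (B : set (T -> R)) (p : (T -> R) -> R).
Definition addf (X Y : T -> R) := fun t => X t + Y t.
Definition sc (a : R) (X : T -> R) := fun t => a * X t.
Hypothesis Badd : forall X Y, B X -> B Y -> B (addf X Y).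
Hypothesis Bsc : forall a X, B X -> B (sc a X).
Hypothesis padd : forall X Y, B X -> B Y -> p (addf X Y) <= p X + p Y.
Hypothesis psc : forall a X, 0 < a -> B X -> p (sc a X) = a * p X.
Variable X0 : T -> R.
Hypothesis BX0 : B X0.

Let B0 : B (fun _ => 0).
Proof. have -> : (fun _ : T => 0 : R) = sc 0 X0 by apply/funext => t; rewrite /sc mul0r.
exact: Bsc. Qed.

Let p0 : p (fun _ => 0) = 0.
Proof.
have := psc (a:=2) (ltr0Sn _ 1) B0.
have -> : sc 2 (fun _ : T => 0 : R) = (fun _ => 0) by apply/funext => t; rewrite /sc mulr0.
lra.
Qed.

Definition SL (q : (T -> R) -> R) :=
  [/\ forall X Y, B X -> B Y -> q (addf X Y) <= q X + q Y,
      forall a X, 0 < a -> B X -> q (sc a X) <= a * q X &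
      forall X, B X -> q X <= p X].

Lemma SL0 q : SL q -> q (fun _ => 0) = 0.
Proof.
case=> _ h2 h3; apply/eqP; rewrite eq_le; apply/andP; split.
  by apply: le_trans (h3 _ B0) _; rewrite p0.
have := h2 2 _ (ltr0Sn _ 1) B0.
have -> : sc 2 (fun _ : T => 0 : R) = (fun _ => 0) by apply/funext => t; rewrite /sc mulr0.
lra.
Qed.

Lemma SLneg q X : SL q -> B X -> 0 <= q X + q (sc (-1) X).
Proof.
move=> sq BX; have [h1 _ _] := sq.
have := h1 _ _ BX (Bsc (-1) BX).
have -> : addf X (sc (-1) X) = (fun _ => 0).
  by apply/funext => t; rewrite /addf /sc; lra.
by rewrite SL0.
Qed.

Lemma SLhom q a X : SL q -> 0 < a -> B X -> q (sc a X) = a * q X.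
Proof.
move=> sq a0 BX; have [_ h2 _] := sq.
apply/eqP; rewrite eq_le h2 //=.
have := h2 a^-1 (sc a X) _ (Bsc a BX); rewrite invr_gt0 => /(_ a0).
have -> : sc a^-1 (sc a X) = X.
  by apply/funext => t; rewrite /sc mulrA mulVf ?mul1r // gt_eqF.
have ia : 0 < a^-1 by rewrite invr_gt0.
move=> h; rewrite -(ler_pM2l ia) mulrA mulVf ?mul1r ?gt_eqF //.
Qed.

Lemma SLhom0 q t X : SL q -> 0 <= t -> B X -> q (sc t X) = t * q X.
Proof.
move=> sq; rewrite le_eqVlt => /orP[/eqP <-|t0] BX; last exact: SLhom.
have -> : sc 0 X = (fun _ => 0) by apply/funext => s; rewrite /sc mul0r.
by rewrite SL0 // mul0r.
Qed.


Definition qY (q : (T -> R) -> R) (Y X : T -> R) : R :=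
  inf [set x | exists t, 0 <= t /\ x = q (addf X (sc t Y)) - t * q Y].

Section qYprops.
Variables (q : (T -> R) -> R) (Y : T -> R).
Hypothesis sq : SL q.
Hypothesis BY : B Y.

Let E X := [set x | exists t, 0 <= t /\ x = q (addf X (sc t Y)) - t * q Y].

Lemma qY_lb X : B X -> forall t, 0 <= t ->
  - q (sc (-1) X) <= q (addf X (sc t Y)) - t * q Y.
Proof.
move=> BX t t0; have [h1 _ _] := sq.
have := h1 _ _ (Badd BX (Bsc t BY)) (Bsc (-1) BX).
have -> : addf (addf X (sc t Y)) (sc (-1) X) = sc t Y.
  by apply/funext => s; rewrite /addf /sc; lra.
rewrite SLhom0 //; lra.
Qed.

Lemma E_ne X : nonempty (E X).
Proof. by exists (q (addf X (sc 0 Y)) - 0 * q Y); exists 0. Qed.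

Lemma E_lb X : B X -> has_lbound (E X).
Proof. by move=> BX; exists (- q (sc (-1) X)) => x [t [t0 ->]]; exact: qY_lb. Qed.

Lemma qY_le X t : B X -> 0 <= t -> qY q Y X <= q (addf X (sc t Y)) - t * q Y.
Proof. by move=> BX t0; apply: (ge_inf (E_lb BX)); exists t. Qed.

Lemma qY_leq X : B X -> qY q Y X <= q X.
Proof.
move=> BX; have := qY_le BX (lexx 0).
have -> : addf X (sc 0 Y) = X by apply/funext => s; rewrite /addf /sc; lra.
lra.
Qed.

Lemma qY_negY : qY q Y (sc (-1) Y) <= - q Y.
Proof.
have := qY_le (Bsc (-1) BY) ler01.
have -> : addf (sc (-1) Y) (sc 1 Y) = (fun _ => 0) by apply/funext => s; rewrite /addf /sc; lra.
rewrite SL0 //; lra.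
Qed.

Lemma qY_SL : SL (qY q Y).
Proof.
have [h1 h2 h3] := sq.
split.
- move=> X1 X2 BX1 BX2.
  suff H : forall t1 t2, 0 <= t1 -> 0 <= t2 -> qY q Y (addf X1 X2) <=
     (q (addf X1 (sc t1 Y)) - t1 * q Y) + (q (addf X2 (sc t2 Y)) - t2 * q Y).
    have : qY q Y (addf X1 X2) - qY q Y X1 <= qY q Y X2.
      apply: lb_le_inf; first exact: E_ne.
      move=> x [t2 [t20 ->]].
      have : qY q Y (addf X1 X2) - (q (addf X2 (sc t2 Y)) - t2 * q Y) <= qY q Y X1.
        apply: lb_le_inf; first exact: E_ne.
        move=> y [t1 [t10 ->]]; have := H _ _ t10 t20; lra.
      lra.
    lra.
  move=> t1 t2 t10 t20.
  have := qY_le (Badd BX1 BX2) (addr_ge0 t10 t20).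
  have := h1 _ _ (Badd BX1 (Bsc t1 BY)) (Badd BX2 (Bsc t2 BY)).
  have -> : addf (addf X1 (sc t1 Y)) (addf X2 (sc t2 Y)) = addf (addf X1 X2) (sc (t1 + t2) Y).
    by apply/funext => s; rewrite /addf /sc; lra.
  lra.
- move=> a X a0 BX.
  rewrite -ler_pdivrMl //; apply: lb_le_inf; first exact: E_ne.
  move=> x [t [t0 ->]]; rewrite ler_pdivrMl //.
  have := qY_le (Bsc a BX) (mulr_ge0 (ltW a0) t0).
  have -> : addf (sc a X) (sc (a * t) Y) = sc a (addf X (sc t Y)).
    by apply/funext => s; rewrite /addf /sc; lra.
  rewrite (SLhom sq a0 (Badd BX (Bsc t BY))).
  have -> : a * (q (addf X (sc t Y)) - t * q Y) = a * q (addf X (sc t Y)) - a * t * q Y by ring.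
  done.
- by move=> X BX; apply: le_trans (qY_leq BX) (h3 _ BX).
Qed.

End qYprops.

Lemma SLp : SL p.
Proof. by split => // a X a0 BX; rewrite psc. Qed.

Definition Sset := {q : (T -> R) -> R | SL q /\ q (sc (-1) X0) <= - p X0}.

Definition Srel (s1 s2 : Sset) : bool :=
  `[< forall X, B X -> sval s2 X <= sval s1 X >].

Lemma Sset_chain (A : set Sset) : total_on A Srel ->
  (exists s, A s) -> exists t : Sset, forall s, A s -> Srel s t.
Proof.
move=> tot [s0 As0].
pose m X := inf [set sval s X | s in A].
have lbs : forall s : Sset, forall X, B X -> - p (sc (-1) X) <= sval s X.
  move=> [q [sq _]] X BX /=; have := SLneg sq BX; have [_ _ h3] := sq.
  have := h3 _ (Bsc (-1) BX); lra.
have mne X : nonempty [set sval s X | s in A] by exists (sval s0 X); exists s0.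
have mlb X : B X -> has_lbound [set sval s X | s in A].
  by move=> BX; exists (- p (sc (-1) X)) => _ [s As <-]; exact: lbs.
have mle s X : A s -> B X -> m X <= sval s X.
  by move=> As BX; apply: (ge_inf (mlb _ BX)); exists s.
have SLm : SL m.
  split.
  - move=> X Y BX BY.
    have H : forall s1 s2, A s1 -> A s2 -> m (addf X Y) <= sval s1 X + sval s2 Y.
      move=> s1 s2 As1 As2.
      have [/asboolP h|/asboolP h] := tot _ _ As1 As2.
      + apply: le_trans (mle _ _ As2 (Badd BX BY)) _.
        have [[h1 _ _] _] := svalP s2.
        apply: le_trans (h1 _ _ BX BY) _; have := h _ BX; lra.
      + apply: le_trans (mle _ _ As1 (Badd BX BY)) _.
        have [[h1 _ _] _] := svalP s1.
        apply: le_trans (h1 _ _ BX BY) _; have := h _ BY; lra.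
    have : m (addf X Y) - m X <= m Y.
      apply: lb_le_inf => // _ [s2 As2 <-].
      have : m (addf X Y) - sval s2 Y <= m X.
        apply: lb_le_inf => // _ [s1 As1 <-]; have := H _ _ As1 As2; lra.
      lra.
    lra.
  - move=> a X a0 BX.
    rewrite -ler_pdivrMl //; apply: lb_le_inf => // _ [s As <-].
    rewrite ler_pdivrMl //.
    have [[_ h2 _] _] := svalP s.
    exact: le_trans (mle _ _ As (Bsc a BX)) (h2 _ _ a0 BX).
  - move=> X BX; have [[_ _ h3] _] := svalP s0.
    exact: le_trans (mle _ _ As0 BX) (h3 _ BX).
have mX0 : m (sc (-1) X0) <= - p X0.
  have [_ h] := svalP s0; exact: le_trans (mle _ _ As0 (Bsc _ BX0)) h.
exists (exist _ m (conj SLm mX0)) => s As; apply/asboolP => X BX /=.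
exact: mle.
Qed.

Lemma hahn_banach : exists l : (T -> R) -> R,
  [/\ forall X Y, B X -> B Y -> l (addf X Y) = l X + l Y,
      forall a X, B X -> l (sc a X) = a * l X,
      forall X, B X -> l X <= p X & l X0 = p X0].
Proof.
have SL0' := qY_SL SLp BX0.
have t0 : Sset.
  exists (qY p X0); split => //; exact: qY_negY SLp BX0.
have H1 : forall s, Srel s s by move=> s; apply/asboolP => X BX.
have H2 : forall r s t, Srel r s -> Srel s t -> Srel r t.
  move=> r s t h1 h2; apply/asboolP => X BX.
  move/asboolP: h1 => h1; move/asboolP: h2 => h2.
  exact: le_trans (h2 _ BX) (h1 _ BX).
have H3 : forall A, total_on A Srel -> exists t, forall s, A s -> Srel s t.
  move=> A tot; have [ne|e] := pselect (exists s, A s).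
    exact: Sset_chain.
  by exists t0 => s As; exfalso; apply: e; exists s.
have [q qmax] := ZL_preorder t0 H1 H2 H3.
have [sq qX0] := svalP q.
set l := sval q in sq qX0.
have negY : forall Y, B Y -> l (sc (-1) Y) <= - l Y.
  move=> Y BY.
  have SLY := qY_SL sq BY.
  have hY : qY l Y (sc (-1) X0) <= - p X0.
    exact: le_trans (qY_leq sq BY (Bsc _ BX0)) qX0.
  pose sY : Sset := exist _ (qY l Y) (conj SLY hY).
  have : Srel q sY by apply/asboolP => X BX /=; exact: qY_leq.
  move=> /qmax /asboolP /(_ _ (Bsc (-1) BY)) /= h.
  exact: le_trans h (qY_negY sq BY).
have negE : forall Y, B Y -> l (sc (-1) Y) = - l Y.
  move=> Y BY; apply/eqP; rewrite eq_le negY //=; have := SLneg sq BY; lra.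
have [h1 h2 h3] := sq.
have addE : forall X Y, B X -> B Y -> l (addf X Y) = l X + l Y.
  move=> X Y BX BY; apply/eqP; rewrite eq_le h1 //=.
  have := h1 _ _ (Bsc (-1) BX) (Bsc (-1) BY).
  have -> : addf (sc (-1) X) (sc (-1) Y) = sc (-1) (addf X Y).
    by apply/funext => s; rewrite /addf /sc; lra.
  rewrite !negE //; [lra|exact: Badd].
exists l; split => //.
- move=> a X BX; have [a0|a0|->] := ltgtP a 0.
  + have -> : sc a X = sc (-1) (sc (- a) X).
      by apply/funext => s; rewrite /sc; lra.
    rewrite negE; last exact: Bsc.
    rewrite (SLhom sq _ BX); [lra|lra].
  + exact: SLhom.
  + rewrite (SLhom0 sq (lexx 0) BX); done.
- apply/eqP; rewrite eq_le h3 //=; have := SLneg sq BX0; lra.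
Qed.

End HahnBanach.


Lemma bounded_by (T : Type) (R : realType) (A : set T) (f : T -> R) K :
  (forall x, A x -> `|f x| <= K) -> [bounded f x | x in A].
Proof.
move=> h; rewrite /bounded_near; near=> M => x Ax /=.
apply: le_trans (h _ Ax) _; near: M; apply: nbhs_pinfty_ge; exact: num_real.
Unshelve. all: end_near. Qed.

Lemma bint d (T : measurableType d) (R : realType) (mu : {measure set T -> \bar R})
  (D : set T) (f : T -> R) K : measurable D -> (mu D < +oo)%E ->
  measurable_fun D f -> (forall x, D x -> `|f x| <= K) ->
  mu.-integrable D (EFin \o f).
Proof.
move=> mD Dfin mf h; apply: measurable_bounded_integrable => //.
exact: bounded_by h.
Qed.

Lemma count_le (m : nat) (P : nat -> bool) (R : realType) (z : R) : 0 <= z ->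
  (forall i, (i < m)%N -> P i -> (i.+1)%:R <= z) ->
  \sum_(0 <= i < m) ((P i)%:R : R) <= z.
Proof.
elim: m => [|m IH] z0 h; first by rewrite big_geq.
rewrite big_nat_recr //=.
case Pm: (P m).
  have : \sum_(0 <= i < m) ((P i)%:R : R) <= m%:R.
    have -> : (m%:R : R) = \sum_(0 <= i < m) (1 : R) by rewrite sumr_const_nat subn0.
    apply: ler_sum => i _.
    by case: (P i).
  have := h m (ltnSn m) Pm; rewrite -natr1 /=; lra.
rewrite addr0; apply: IH => // i im Pi; apply: h => //; exact: ltnW.
Qed.

Lemma count_ge (m : nat) (R : realType) (z : R) : z <= m%:R ->
  z - 1 <= \sum_(0 <= i < m) ((((i.+1)%:R <= z)%R)%:R : R).
Proof.
elim: m => [|m IH] zm; first by rewrite big_geq //; lra.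
rewrite big_nat_recr //=.
have [zm'|mz] := lerP z m%:R.
  have := IH zm'; case: (_ <= z)%R; rewrite /=; lra.
have -> : \sum_(0 <= i < m) ((((i.+1)%:R <= z)%R)%:R : R) = m%:R.
  have -> : (m%:R : R) = \sum_(0 <= i < m) (1 : R) by rewrite sumr_const_nat subn0.
  apply: eq_big_nat => i /andP[_ im].
  rewrite (_ : ((i.+1)%:R : R) <= z) //; apply: le_trans (ltW mz).
  by rewrite ler_nat.
move: zm; rewrite -natr1 => zm.
case: (_ <= z)%R; rewrite /=; lra.
Qed.

Section RintSimple.
Context d (T : measurableType d) (R : realType).
Variables (mu : {measure set T -> \bar R}) (D : set T).
Hypothesis mD : measurable D.
Hypothesis Dfin : (mu D < +oo)%E.
Variable E : nat -> set T.
Hypothesis mE : forall i, measurable (E i).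

Lemma msum_indic m : measurable_fun D (fun x => \sum_(0 <= i < m) (\1_(E i) x : R)).
Proof.
elim: m => [|m IH].
  by under eq_fun do rewrite big_geq //; exact: measurable_cst.
under eq_fun do rewrite big_nat_recr //=.
apply: measurable_funD => //; exact: measurable_indic.
Qed.

Lemma sum_indic_bd m x : 0 <= \sum_(0 <= i < m) (\1_(E i) x : R) <= m%:R.
Proof.
apply/andP; split; first by apply: sumr_ge0 => i _; rewrite indicE.
have -> : (m%:R : R) = \sum_(0 <= i < m) (1 : R) by rewrite sumr_const_nat subn0.
by apply: ler_sum => i _; rewrite indicE; case: (_ \in _).
Qed.

Lemma Rint_simple c (dl : R) m :
  Rintegral mu D (fun x => c + dl * \sum_(0 <= i < m) \1_(E i) x) =
  c * fine (mu D) + dl * \sum_(0 <= i < m) fine (mu (E i `&` D)).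
Proof.
elim: m => [|m IH].
  rewrite big_geq // mulr0 addr0 -Rintegral_cst //; apply: eq_Rintegral => x _.
  by rewrite big_geq // mulr0 addr0.
rewrite big_nat_recr //= mulrDr addrA -IH.
rewrite (@eq_Rintegral _ _ _ _ _ (fun x => (c + dl * \sum_(0 <= i < m) \1_(E i) x) + dl * \1_(E m) x)); last first.
  by move=> x _; rewrite big_nat_recr //= mulrDr addrA.
have mS := msum_indic m.
rewrite RintegralD //; last first.
- apply: (@bint _ _ _ _ _ _ `|dl|) => //.
    by apply: measurable_funM => //; exact: measurable_indic.
  move=> x _; rewrite normrM -[X in _ <= X]mulr1 ler_wpM2l // indicE; case: (_ \in _) => /=; rewrite ?normr1 ?normr0 //.
- apply: (@bint _ _ _ _ _ _ (`|c| + `|dl| * m%:R)) => //.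
    apply: measurable_funD; first exact: measurable_cst.
    by apply: measurable_funM => //; exact: measurable_cst.
  move=> x _; apply: le_trans (ler_normD _ _) _; rewrite lerD2l normrM ler_wpM2l //.
  have /andP[h1 h2] := sum_indic_bd m x; rewrite ger0_norm //.
congr (_ + _); rewrite RintegralZl //; last first.
  apply: (@bint _ _ _ _ _ _ 1) => //.
  by move=> x _; rewrite indicE; case: (_ \in _) => /=; rewrite ?normr1 ?normr0.
by rewrite /Rintegral integral_indic.
Qed.

End RintSimple.


Section Basic.
Context d (T : measurableType d) (R : realType) (w : set T -> R) (alpha : R).
Hypothesis cw : capacity w.
Hypothesis a01 : 0 < alpha < 1.

Lemma w_mono (A B : set T) : measurable A -> measurable B -> A `<=` B -> w A <= w B.
Proof. by move: cw => [_ _ h]; exact: h. Qed.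
Lemma w0 : w set0 = 0. Proof. by move: cw => [h _ _]. Qed.
Lemma wT : w setT = 1. Proof. by move: cw => [_ h _]. Qed.
Lemma w_ge0 A : measurable A -> 0 <= w A.
Proof. by move=> mA; rewrite -w0; apply: w_mono => //. Qed.
Lemma w_le1 A : measurable A -> w A <= 1.
Proof. by move=> mA; rewrite -wT; apply: w_mono => //. Qed.

Lemma bdd_add (X Y : T -> R) : bdd_meas X -> bdd_meas Y -> bdd_meas (addf X Y).
Proof.
move=> [mX [M hM]] [mY [N hN]]; split; first exact: measurable_funD.
by exists (M + N) => t; apply: le_trans (ler_normD _ _) _; exact: lerD.
Qed.

Lemma bdd_sc (a : R) (X : T -> R) : bdd_meas X -> bdd_meas (sc a X).
Proof.
move=> [mX [M hM]]; split; first by apply: measurable_funM => //; exact: measurable_cst.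
by exists (`|a| * M) => t; rewrite /sc normrM ler_wpM2l.
Qed.

Lemma bdd_cst (c : R) : bdd_meas (fun _ : T => c).
Proof. by split; [exact: measurable_cst|exists `|c|]. Qed.

Lemma bdd_indic A : measurable A -> bdd_meas (\1_A : T -> R).
Proof.
move=> mA; split; first exact: measurable_indic.
by exists 1 => t; rewrite indicE; case: (_ \in _); rewrite ?normr1 ?normr0.
Qed.

Lemma bdd_M (X : T -> R) : bdd_meas X ->
  exists M, 0 <= M /\ forall t, -M <= X t <= M.
Proof.
move=> [_ [M hM]]; exists `|M|; split => // t.
rewrite -ler_norml; apply: le_trans (hM t) (ler_norm _).
Qed.

Section VaR.
Variables (X : T -> R) (M : R) (t : R).
Hypothesis mX : measurable_fun setT X.
Hypothesis XM : forall s, -M <= X s <= M.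
Hypothesis t01 : 0 <= t < 1.

Let S := [set x : R | w [set om | x <= X om] <= t].

Lemma mlev (x : R) : measurable [set om | x <= X om].
Proof.
have -> : [set om | x <= X om] = X @^-1` `[x, +oo[.
  by apply/seteqP; split => s /=; rewrite in_itv /= andbT.
by rewrite -[X @^-1` _]setTI; apply: mX => //; exact: measurable_itv.
Qed.

Lemma S_top : S (M + 1).
Proof.
rewrite /S /=.
have -> : [set om | M + 1 <= X om] = set0.
  apply/seteqP; split => s //= h; have := XM s; lra.
by rewrite w0; case/andP: t01.
Qed.

Lemma S_gt x : S x -> - M < x.
Proof.
rewrite /S /= => h; rewrite ltNge; apply/negP => xM.
have : [set om | x <= X om] = setT.
  apply/seteqP; split => s // _ /=; have := XM s; lra.
by move=> e; move: h; rewrite e wT; case/andP: t01 => _; lra.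
Qed.

Lemma VaR_le x : S x -> VaR w t X <= x.
Proof.
move=> Sx; apply: (ge_inf _ Sx); exists (- M) => y Sy; exact/ltW/S_gt.
Qed.

Lemma VaR_ge b : (forall x, S x -> b <= x) -> b <= VaR w t X.
Proof. by move=> h; apply: lb_le_inf => //; exists (M + 1); exact: S_top. Qed.

Lemma VaR_bd : - M <= VaR w t X <= M + 1.
Proof.
apply/andP; split; last exact/VaR_le/S_top.
by apply: VaR_ge => x /S_gt /ltW.
Qed.

End VaR.

Lemma VaR_noninc (X : T -> R) (M t t' : R) : measurable_fun setT X -> (forall s, -M <= X s <= M) ->
  0 <= t -> t <= t' -> t' < 1 -> VaR w t' X <= VaR w t X.
Proof.
move=> mX XM t0 tt' t'1.
have ht : 0 <= t < 1 by apply/andP; split => //; lra.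
have ht' : 0 <= t' < 1 by apply/andP; split => //; lra.
apply: (VaR_ge XM ht) => x Sx; apply: (VaR_le XM ht').
rewrite /=; apply: le_trans tt'; exact: Sx.
Qed.

Definition D := `]0, alpha[%classic : set R.

Lemma mD : measurable D. Proof. exact: measurable_itv. Qed.

Lemma lebD : lebesgue_measure D = alpha%:E.
Proof.
rewrite /D lebesgue_measure_itv /= lte_fin; case/andP: a01 => a0 _.
by rewrite a0 /= sube0.
Qed.

Lemma Dfin : (lebesgue_measure D < +oo)%E.
Proof. by rewrite lebD ltry. Qed.

Lemma mlt (a : R) : measurable [set s : R | s < a].
Proof.
have -> : [set s : R | s < a] = `]-oo, a[%classic.
  by apply/seteqP; split => s /=; rewrite in_itv.
exact: measurable_itv.
Qed.

Lemma leb_cut (a : R) : 0 <= a ->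
  fine (lebesgue_measure ([set s : R | s < a] `&` D)) = Num.min a alpha.
Proof.
move=> a0.
have -> : [set s : R | s < a] `&` D = `]0, Num.min a alpha[%classic.
  apply/seteqP; split => s /=; rewrite /D /= !in_itv /= lt_min.
    by move=> [sa /andP[-> ->]]; rewrite sa.
  by move=> /andP[-> /andP[-> ->]].
rewrite lebesgue_measure_itv /= lte_fin.
case: ifPn => [h|]; first by rewrite sube0.
rewrite -leNgt /= => h; apply/eqP; rewrite eq_le h /= le_min a0 /=.
by case/andP: a01 => a1 _; rewrite ltW.
Qed.

Definition cl (s : R) := if s <= 0 then 0 else if s <= alpha then s else alpha.

Lemma cl_nd : {homo cl : x y / x <= y}.
Proof.
move=> x y xy; rewrite /cl; case/andP: a01 => a0 a1.
case: ifPn => x0; case: ifPn => y0; try case: ifPn; try case: ifPn; lra.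
Qed.

Lemma cl_in s : 0 <= cl s < 1.
Proof.
rewrite /cl; case/andP: a01 => a0 a1; apply/andP.
case: ifPn => s0; [lra|case: ifPn => sa; lra].
Qed.

Lemma cl_id s : D s -> cl s = s.
Proof.
rewrite /D /= in_itv /= => /andP[s0 sa]; rewrite /cl.
by rewrite leNgt s0 /= ltW.
Qed.

Lemma VaR_meas (X : T -> R) (M : R) : measurable_fun setT X -> (forall s, -M <= X s <= M) ->
  measurable_fun D (fun s => VaR w s X).
Proof.
move=> mX XM.
have mg : measurable_fun D (fun s => VaR w (cl s) X).
  apply: nonincreasing_measurable; first exact: mD.
  move=> x y xy; have := cl_in x; have := cl_in y; move=> /andP[y0 y1] /andP[x0 x1].
  exact: (VaR_noninc mX XM x0 (cl_nd xy) y1).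
apply: eq_measurable_fun mg => s /set_mem Ds /=; by rewrite cl_id.
Qed.

Lemma VaR_int (X : T -> R) (M : R) : measurable_fun setT X -> (forall s, -M <= X s <= M) -> 0 <= M ->
  lebesgue_measure.-integrable D (EFin \o (fun s => VaR w s X)).
Proof.
move=> mX XM M0; apply: (@bint _ _ _ _ _ _ (M + 1)).
- exact: mD.
- exact: Dfin.
- exact: VaR_meas XM.
move=> s Ds; have hs : 0 <= s < 1.
  by move: Ds; rewrite /D /= in_itv /= => /andP[s0 sa]; case/andP: a01 => _ a1; lra.
have := VaR_bd XM hs; rewrite ler_norml => /andP[h1 h2]; apply/andP; split; lra.
Qed.

Lemma ES_lower (X : T -> R) (M dl : R) (m : nat) : measurable_fun setT X -> (forall s, -M <= X s <= M) ->
  0 <= M -> 0 < dl ->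
  - M + dl * \sum_(0 <= i < m)
     (Num.min (w [set om | - M + (i.+1)%:R * dl <= X om]) alpha / alpha)
  <= ES w alpha X.
Proof.
move=> mX XM M0 dl0.
set A := fun i : nat => [set om | - M + (i.+1)%:R * dl <= X om].
have mA i : measurable (A i) by exact: mlev.
set E := fun i : nat => [set s : R | s < w (A i)].
have mE i : measurable (E i) by exact: mlt.
have a0 : 0 < alpha by case/andP: a01.
rewrite /ES ler_pdivlMr //.
have -> : (- M + dl * \sum_(0 <= i < m) (Num.min (w (A i)) alpha / alpha)) * alpha =
    - M * fine (lebesgue_measure D) + dl * \sum_(0 <= i < m) fine (lebesgue_measure (E i `&` D)).
  rewrite lebD /= mulrDl -mulrA -mulr_suml; congr (_ + _ * _).
  rewrite -mulrA mulVf ?mulr1 ?gt_eqF //; apply: eq_bigr => i _; rewrite leb_cut //; exact: w_ge0.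
rewrite -(@Rint_simple _ _ _ lebesgue_measure D mD Dfin E mE).
apply: le_Rintegral.
- exact: mD.
- apply: (@bint _ _ _ _ _ _ (`|M| + dl * m%:R)).
  + exact: mD.
  + exact: Dfin.
  + apply: measurable_funD; first exact: measurable_cst.
    apply: measurable_funM; first exact: measurable_cst.
    exact: msum_indic.
  + move=> s _; apply: le_trans (ler_normD _ _) _; rewrite normrN lerD2l normrM.
    rewrite gtr0_norm //; have /andP[h1 h2] := sum_indic_bd R E m s.
    by rewrite ger0_norm // ler_wpM2l // ltW.
- exact: VaR_int XM M0.
move=> s Ds.
have hs : 0 <= s < 1.
  by move: Ds; rewrite /D /= in_itv /= => /andP[s0 sa]; case/andP: a01 => _ a1; lra.
apply: (VaR_ge XM hs) => x Sx.
have xM := S_gt XM hs Sx.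
have z0 : 0 <= (x + M) / dl by apply: divr_ge0; lra.
have h : forall i, (i < m)%N -> s \in E i -> (i.+1)%:R <= (x + M) / dl.
  move=> i _ /set_mem; rewrite /E /= => sw; rewrite ler_pdivlMr //.
  rewrite leNgt; apply/negP => hx.
  have : w (A i) <= w [set om | x <= X om].
    apply: w_mono => //; first exact: mlev.
    move=> om; rewrite /A /= => hom; lra.
  move: Sx => /= Sx hw; lra.
have := count_le z0 h.
have -> : \sum_(0 <= i < m) ((s \in E i)%:R : R) = \sum_(0 <= i < m) \1_(E i) s.
  by apply: eq_bigr => i _; rewrite indicE.
move=> hc; have := ler_wpM2l (ltW dl0) hc.
rewrite [dl * ((x + M) / dl)]mulrC divfK ?gt_eqF //; lra.
Qed.


Lemma indic01 (A : set T) om : (\1_A om : R) = 1 \/ (om \notin A /\ (\1_A om : R) = 0).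
Proof. rewrite indicE; case: (boolP (om \in A)) => h; [by left|by right]. Qed.

Lemma ES_indic (A : set T) : measurable A -> ES w alpha (\1_A) <= w A / alpha.
Proof.
move=> mA; have a0 : 0 < alpha by case/andP: a01.
have mX : measurable_fun setT (\1_A : T -> R) by exact: measurable_indic.
have XM : forall s, -1 <= (\1_A s : R) <= 1.
  by move=> s; case: (indic01 A s) => [->|[_ ->]]; apply/andP; split; lra.
set E := [set s : R | s < w A].
rewrite /ES ler_pM2r ?invr_gt0 //.
apply: (@le_trans _ _ (Rintegral lebesgue_measure D \1_E)).
  apply: le_Rintegral.
  - exact: mD.
  - exact: (VaR_int mX XM ler01).
  - apply: (@bint _ _ _ _ _ _ 1); [exact: mD|exact: Dfin|apply: measurable_indic; exact: mlt|].
    by move=> s _ /=; rewrite /indic; case: (_ \in _); rewrite ?normr1 ?normr0.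
  move=> s Ds.
  have hs : 0 <= s < 1.
    by move: Ds; rewrite /D /= in_itv /= => /andP[s0 sa]; case/andP: a01 => _ a1; lra.
  case: (boolP (s \in E)) => sE /=.
    apply/ler_addgt0Pr => e e0; apply: (VaR_le XM hs) => /=.
    have -> : [set om | 1 + e <= (\1_A om : R)] = set0.
      apply/seteqP; split => om //= h; have := XM om; lra.
    by rewrite w0; case/andP: hs.
  apply/ler_addgt0Pr => e e0; rewrite add0r.
  have e'0 : 0 < Num.min e 1 by rewrite lt_min e0 ltr01.
  apply: (@le_trans _ _ (Num.min e 1)); last by rewrite ge_min lexx.
  apply: (VaR_le XM hs) => /=.
  have -> : [set om | Num.min e 1 <= (\1_A om : R)] = A.
    apply/seteqP; split => om /=.
      case: (indic01 A om) => [h|[h ->]]; last by lra.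
      by move=> _; move: h; rewrite indicE; case: (boolP (om \in A)) => [/set_mem|] //= _ /eqP; rewrite eq_sym oner_eq0.
    by move=> Aom; rewrite indicE mem_set //= ge_min lexx orbT.
  by rewrite leNgt; apply/negP => h; move/negP: sE; apply; exact/mem_set.
have := @Rint_simple _ _ _ lebesgue_measure D mD Dfin (fun _ => E) (fun _ => mlt (w A)) 0 1 1.
rewrite big_nat1 mul0r add0r mul1r leb_cut; last exact: w_ge0.
move=> h; apply: (@le_trans _ _ (Num.min (w A) alpha)); last by rewrite ge_min lexx.
rewrite -h le_eqVlt; apply/orP; left; apply/eqP; apply: eq_Rintegral => x _.
by rewrite big_nat1 add0r mul1r.
Qed.

End Basic.


Section PProps.
Context d (T : measurableType d) (R : realType) (w : set T -> R) (alpha : R).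
Hypothesis coh : coherent (ES w alpha).
Local Notation p := (ES w alpha).

Lemma p_mono (X Y : T -> R) : bdd_meas X -> bdd_meas Y -> (forall t, X t <= Y t) -> p X <= p Y.
Proof. by case: coh => h _ _ _; exact: h. Qed.

Lemma p_sc (a : R) (X : T -> R) : 0 < a -> bdd_meas X -> p (sc a X) = a * p X.
Proof. by case: coh => _ _ h _ a0 BX; exact: h. Qed.

Lemma p0 : p (fun _ => 0) = 0.
Proof.
have := @p_sc 2 (fun _ => 0) (ltr0Sn _ 1) (bdd_cst T 0).
have -> : sc 2 (fun _ : T => 0 : R) = (fun _ => 0) by apply/funext => t; rewrite /sc mulr0.
lra.
Qed.

Lemma p_cst (c : R) : p (fun _ => c) = c.
Proof.
case: coh => _ h _ _; have := h (fun _ => 0) c (bdd_cst T 0).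
have -> : (fun t : T => (fun _ : T => 0 : R) t + c) = (fun _ => c) by apply/funext => t; rewrite add0r.
by rewrite p0 add0r.
Qed.

Lemma p_add (X Y : T -> R) : bdd_meas X -> bdd_meas Y -> p (addf X Y) <= p X + p Y.
Proof.
move=> BX BY; case: coh => _ _ _ h.
have h2 : 0 <= (2:R)^-1 <= 1 by apply/andP; split; lra.
have := h X Y (2:R)^-1 BX BY h2.
set Z := fun t => _.
have -> : addf X Y = sc 2 Z by apply/funext => t; rewrite /addf /sc /Z; lra.
have BZ : bdd_meas Z.
  have -> : Z = addf (sc (2:R)^-1 X) (sc (1 - (2:R)^-1) Y) by [].
  by apply: bdd_add; exact: bdd_sc.
rewrite p_sc //; lra.
Qed.

End PProps.

Section LMeasure.
Context d (T : measurableType d) (R : realType) (w : set T -> R) (alpha : R).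
Hypothesis cw : continuous_capacity w.
Hypothesis a01 : 0 < alpha < 1.
Hypothesis coh : coherent (ES w alpha).
Variable l : (T -> R) -> R.
Hypothesis ladd : forall X Y, bdd_meas X -> bdd_meas Y -> l (addf X Y) = l X + l Y.
Hypothesis lsc : forall a X, bdd_meas X -> l (sc a X) = a * l X.
Hypothesis lle : forall X, bdd_meas X -> l X <= ES w alpha X.

Let cap : capacity w. Proof. by case: cw. Qed.

Lemma l0 : l (fun _ => 0) = 0.
Proof.
have := lsc 0 (bdd_cst T 0).
have -> : sc 0 (fun _ : T => 0 : R) = (fun _ => 0) by apply/funext => t; rewrite /sc mulr0.
by rewrite mul0r.
Qed.

Lemma l_cst c : l (fun _ => c) = c.
Proof.
have h1 := lle (bdd_cst T c); rewrite p_cst // in h1.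
have h2 := lle (bdd_cst T (- c)); rewrite p_cst // in h2.
have := lsc (-1) (bdd_cst T c).
have -> : sc (-1) (fun _ : T => c) = (fun _ => - c) by apply/funext => t; rewrite /sc; lra.
lra.
Qed.

Lemma l_mono (X Y : T -> R) : bdd_meas X -> bdd_meas Y -> (forall t, X t <= Y t) -> l X <= l Y.
Proof.
move=> BX BY XY.
have BZ : bdd_meas (addf Y (sc (-1) X)) by apply: bdd_add => //; exact: bdd_sc.
have -> : Y = addf X (addf Y (sc (-1) X)) by apply/funext => t; rewrite /addf /sc; lra.
rewrite ladd //.
have := lsc (-1) BZ.
have := lle (bdd_sc (-1) BZ).
have hm : ES w alpha (sc (-1) (addf Y (sc (-1) X))) <= ES w alpha (fun _ => 0).
  apply: (p_mono coh) => //; [exact: bdd_sc|exact: bdd_cst|].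
  by move=> t; rewrite /addf /sc; have := XY t; lra.
rewrite p0 // in hm.
lra.
Qed.

Definition Q0 (A : set T) := l (\1_A).

Lemma Q0_ge0 A : measurable A -> 0 <= Q0 A.
Proof.
move=> mA; rewrite /Q0 -l0; apply: l_mono; [exact: bdd_cst|exact: bdd_indic|].
by move=> t; rewrite indicE; case: (_ \in _).
Qed.

Lemma Q0_le A : measurable A -> Q0 A <= w A / alpha.
Proof.
move=> mA; apply: le_trans (lle (bdd_indic R mA)) _.
exact: ES_indic.
Qed.

Lemma Q0_T : Q0 setT = 1.
Proof.
rewrite /Q0 -[RHS](l_cst 1); congr l; apply/funext => t.
by rewrite indicE in_setT.
Qed.

Lemma indicU (A B : set T) : A `&` B = set0 ->
  (\1_(A `|` B) : T -> R) = addf \1_A \1_B.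
Proof.
move=> AB; apply/funext => t; rewrite /addf !indicE.
case: (boolP (t \in A)) => tA; case: (boolP (t \in B)) => tB.
- exfalso; have : (A `&` B) t by split; exact/set_mem.
  by rewrite AB.
- by rewrite mem_set ?addr0 //; left; exact/set_mem.
- by rewrite mem_set ?add0r //; right; exact/set_mem.
- rewrite memNset ?addr0 //; move=> [] h.
    by move/negP: tA; apply; exact/mem_set.
  by move/negP: tB; apply; exact/mem_set.
Qed.

Lemma Q0_add A B : measurable A -> measurable B -> A `&` B = set0 ->
  Q0 (A `|` B) = Q0 A + Q0 B.
Proof.
by move=> mA mB AB; rewrite /Q0 indicU // ladd //; exact: bdd_indic.
Qed.

Definition lmu : set T -> \bar R :=
  let _ := (cw, a01, coh, ladd, lsc, lle) in fun A => (Num.max (l (\1_A)) 0)%:E.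

Lemma lmuE A : measurable A -> lmu A = (Q0 A)%:E.
Proof. by move=> mA; rewrite /lmu max_l //; exact: Q0_ge0. Qed.

Lemma lmu0 : lmu set0 = 0%E.
Proof.
rewrite lmuE // /Q0 -[RHS]/((0:R)%:E) -l0; congr (l _)%:E.
by apply/funext => t; rewrite indicE in_set0.
Qed.

Lemma lmu_ge0 A : (0 <= lmu A)%E.
Proof. by rewrite /lmu lee_fin le_max lexx orbT. Qed.

Section sigma.
Variable F : nat -> set T.
Hypothesis mF : forall i, measurable (F i).
Hypothesis tF : trivIset setT F.

Let U n := [set x | exists i, (i < n)%N /\ F i x].

Let U0 : U 0 = set0.
Proof. by apply/seteqP; split => x // [i []]. Qed.

Let US n : U n.+1 = U n `|` F n.
Proof.
apply/seteqP; split => x /=.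
  move=> [i [+ Fi]]; rewrite ltnS leq_eqVlt => /orP[/eqP e|ilt]; first by right; rewrite -e.
  by left; exists i.
by move=> [[i [ilt Fi]]|Fn]; [exists i; split => //; exact: ltnW|exists n].
Qed.

Let mU n : measurable (U n).
Proof. by elim: n => [|n IH]; rewrite ?U0 ?US //; exact: measurableU. Qed.

Let UF n : U n `&` F n = set0.
Proof.
apply/seteqP; split => x // [[i [ilt Fi]] Fn].
have : i = n by apply: tF => //; exists x.
by move=> e; move: ilt; rewrite e ltnn.
Qed.

Let sumU n : \sum_(0 <= i < n) lmu (F i) = (Q0 (U n))%:E.
Proof.
elim: n => [|n IH].
  by rewrite big_geq // U0 -lmuE // lmu0.
by rewrite big_nat_recr //= IH US Q0_add // lmuE.
Qed.

Lemma lmu_sigma_aux : measurable (\bigcup_n F n) ->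
  (fun n => \sum_(0 <= i < n) lmu (F i)) @ \oo --> lmu (\bigcup_n F n).
Proof.
move=> mUi.
set V := \bigcup_n F n.
have -> : (fun n => \sum_(0 <= i < n) lmu (F i)) = (fun n => (Q0 (U n))%:E).
  by apply/funext => n; rewrite sumU.
rewrite lmuE //.
apply: cvg_EFin; first exact: nearW.
have -> : fine \o (fun n => (Q0 (U n))%:E) = (fun n => Q0 (U n)) by [].
have UV n : U n `<=` V by move=> x [i [_ Fi]]; exists i.
have decomp n : Q0 V = Q0 (U n) + Q0 (V `\` U n).
  have e : V = U n `|` (V `\` U n) by rewrite setDUK.
  rewrite {1}e Q0_add //; first exact: measurableD.
  by rewrite setDIK.
pose A n := V `\` U n.
have mA n : measurable (A n) by exact: measurableD.
have Adec n : A n.+1 `<=` A n.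
  by move=> x [Vx nU]; split => // Ux; apply: nU; rewrite US; left.
have Acap : \bigcap_n A n = set0.
  apply/seteqP; split => x // Ax; have [i _ Fi] : V x by have [] := Ax 0%N I.
  have [_] := Ax i.+1 I; apply; exists i; split => //.
have wA : (fun n => w (A n)) @ \oo --> (0 : R).
  by case: cw => _ h; exact: h.
have a0 : 0 < alpha by case/andP: a01.
apply: (@squeeze_cvgr _ _ _ _ (fun n => Q0 V - w (A n) / alpha) (fun n => Q0 V)).
- apply: nearW => n /=.
  have := decomp n; have := Q0_ge0 (mA n); have := Q0_le (mA n).
  rewrite /A => h1 h2 h3; apply/andP; split; lra.
- rewrite -[X in _ --> X]subr0; apply: cvgB; first exact: cvg_cst.
  rewrite -(mul0r alpha^-1); exact: cvgMr_tmp.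
- exact: cvg_cst.
Qed.

End sigma.

Lemma lmu_sigma : semi_sigma_additive lmu.
Proof. by move=> F mF tF mU; exact: lmu_sigma_aux. Qed.

HB.instance Definition _ := isMeasure.Build _ _ _ lmu lmu0 lmu_ge0 lmu_sigma.

Lemma lmuT : lmu setT = 1%E.
Proof. by rewrite lmuE // Q0_T. Qed.

HB.instance Definition _ := Measure_isProbability.Build _ _ _ lmu lmuT.

End LMeasure.


Section Final.
Context d (T : measurableType d) (R : realType).

Definition lev (X : T -> R) (M dl : R) (i : nat) := [set om | - M + (i.+1)%:R * dl <= X om].
Definition Ysum (X : T -> R) (M dl : R) (m : nat) (om : T) : R :=
  - M + dl * \sum_(0 <= i < m) \1_(lev X M dl i) om.

Lemma sandwich (X : T -> R) (M dl : R) (m : nat) :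
  (forall s, -M <= X s <= M) -> 0 < dl -> 2 * M <= m%:R * dl -> forall om,
  Ysum X M dl m om <= X om <= Ysum X M dl m om + dl.
Proof.
move=> XM dl0 mM om; rewrite /Ysum /lev.
set z := (X om + M) / dl.
have := XM om => /andP[h1 h2].
have z0 : 0 <= z by apply: divr_ge0; lra.
have zm : z <= m%:R by rewrite /z ler_pdivrMr //; lra.
have e : \sum_(0 <= i < m) (\1_([set om | - M + (i.+1)%:R * dl <= X om]) om : R)
   = \sum_(0 <= i < m) ((((i.+1)%:R <= z)%R)%:R : R).
  apply: eq_bigr => i _; rewrite indicE.
  have -> : (om \in [set om | - M + (i.+1)%:R * dl <= X om]) = ((i.+1)%:R <= z)%R.
    apply/idP/idP => [/set_mem /= h| h]; first by rewrite /z ler_pdivlMr //; lra.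
    by apply/mem_set => /=; move: h; rewrite /z ler_pdivlMr //; lra.
  by [].
have c1 := @count_le m (fun i => ((i.+1)%:R <= z)%R) R z z0 (fun i _ h => h).
have c2 := count_ge zm.
rewrite e; apply/andP; split.
  have := ler_wpM2l (ltW dl0) c1; rewrite /z [dl * (_ / dl)]mulrC divfK ?gt_eqF //; lra.
have := ler_wpM2l (ltW dl0) c2; rewrite /z mulrBr [dl * (_ / dl)]mulrC divfK ?gt_eqF //; lra.
Qed.

Lemma bdd_simple (E : nat -> set T) (c dl : R) m : (forall i, measurable (E i)) ->
  bdd_meas (fun x => c + dl * \sum_(0 <= i < m) (\1_(E i) x : R)).
Proof.
move=> mE; elim: m => [|m IH].
  have -> : (fun x => c + dl * \sum_(0 <= i < 0) (\1_(E i) x : R)) = (fun _ => c).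
    by apply/funext => x; rewrite big_geq // mulr0 addr0.
  exact: bdd_cst.
have -> : (fun x => c + dl * \sum_(0 <= i < m.+1) (\1_(E i) x : R)) =
   addf (fun x => c + dl * \sum_(0 <= i < m) (\1_(E i) x : R)) (sc dl \1_(E m)).
  by apply/funext => x; rewrite /addf /sc big_nat_recr //= mulrDr addrA.
by apply: bdd_add => //; apply: bdd_sc; exact: bdd_indic.
Qed.

End Final.

Section Final2.
Context d (T : measurableType d) (R : realType) (w : set T -> R) (alpha : R).
Hypothesis cw : continuous_capacity w.
Hypothesis a01 : 0 < alpha < 1.
Hypothesis coh : coherent (ES w alpha).

Let cap : capacity w. Proof. by case: cw. Qed.

Lemma l_simple (l : (T -> R) -> R)
  (ladd : forall X Y, bdd_meas X -> bdd_meas Y -> l (addf X Y) = l X + l Y)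
  (lsc : forall a X, bdd_meas X -> l (sc a X) = a * l X)
  (lle : forall X, bdd_meas X -> l X <= ES w alpha X)
  (E : nat -> set T) (mE : forall i, measurable (E i)) (c dl : R) m :
  l (fun x => c + dl * \sum_(0 <= i < m) (\1_(E i) x : R)) =
  c + dl * \sum_(0 <= i < m) l (\1_(E i)).
Proof.
elim: m => [|m IH].
  have -> : (fun x => c + dl * \sum_(0 <= i < 0) (\1_(E i) x : R)) = (fun _ => c).
    by apply/funext => x; rewrite big_geq // mulr0 addr0.
  by rewrite (l_cst coh lsc lle) big_geq // mulr0 addr0.
have -> : (fun x => c + dl * \sum_(0 <= i < m.+1) (\1_(E i) x : R)) =
   addf (fun x => c + dl * \sum_(0 <= i < m) (\1_(E i) x : R)) (sc dl \1_(E m)).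
  by apply/funext => x; rewrite /addf /sc big_nat_recr //= mulrDr addrA.
rewrite ladd; last 2 first.
- exact: bdd_simple.
- by apply: bdd_sc; exact: bdd_indic.
by rewrite lsc ?IH; [rewrite big_nat_recr //= mulrDr addrA|exact: bdd_indic].
Qed.

Lemma choose_m (M e : R) : 0 <= M -> 0 < e -> exists m : nat, 2 * M <= m%:R * e.
Proof.
move=> M0 e0; exists (Num.bound (2 * M / e)).
have := @archi_boundP R (2 * M / e) (divr_ge0 (mulr_ge0 (ler0n _ 2) M0) (ltW e0)).
by rewrite ltr_pdivrMr // => /ltW.
Qed.

Lemma fine_core (P : probability T R) A :
  (forall A, measurable A -> (P A <= (w A / alpha)%:E)%E) -> measurable A ->
  fine (P (A `&` setT)) <= Num.min (w A) alpha / alpha.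
Proof.
move=> hP mA; rewrite setIT.
have fA : P A \is a fin_num by exact: fin_num_measure.
have h1 := hP A mA; have h2 := probability_le1 P mA.
rewrite -(fineK fA) lee_fin in h1; rewrite -(fineK fA) lee_fin in h2.
have a0 : 0 < alpha by case/andP: a01.
rewrite ler_pdivlMr // le_min; apply/andP; split.
  by rewrite -ler_pdivlMr.
by rewrite -[X in _ <= X]mul1r ler_wpM2r // ltW.
Qed.

Lemma E_dir (P : probability T R) :
  (forall A, measurable A -> (P A <= (w A / alpha)%:E)%E) ->
  forall X, bdd_meas X -> (\int[P]_x (X x)%:E <= (ES w alpha X)%:E)%E.
Proof.
move=> hP X BX; have [M [M0 XM]] := bdd_M BX; have mX := BX.1.
have Pfin : (P setT < +oo)%E by rewrite probability_setT ltry.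
have iX : P.-integrable setT (EFin \o X).
  apply: (@bint _ _ _ _ _ _ M) => // x _; rewrite ler_norml; exact: XM.
have fX := integrable_fin_num measurableT iX.
rewrite -(fineK fX) lee_fin; apply/ler_addgt0Pr => e e0.
have [m mM] := choose_m M0 e0.
have sw := sandwich XM e0 mM.
have mE i : measurable (lev X M e i) by exact: mlev.
pose Yd := fun x => (- M + e) + e * \sum_(0 <= i < m) (\1_(lev X M e i) x : R).
have iY : P.-integrable setT (EFin \o Yd).
  apply: (@bint _ _ _ _ _ _ (`|- M + e| + e * m%:R)) => //.
    apply: measurable_funD; first exact: measurable_cst.
    apply: measurable_funM; first exact: measurable_cst.
    exact: msum_indic.
  move=> x _; apply: le_trans (ler_normD _ _) _; rewrite lerD2l normrM.
  rewrite gtr0_norm //; have /andP[h1 h2] := sum_indic_bd R (lev X M e) m x.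
  by rewrite ger0_norm // ler_wpM2l // ltW.
have fY := integrable_fin_num measurableT iY.
have XY : fine (\int[P]_x (X x)%:E) <= Rintegral P setT Yd.
  rewrite /Rintegral; apply: fine_le => //; apply: le_integral => // x _.
  rewrite lee_fin /Yd; have := sw x; rewrite /Ysum => /andP[_ h]; lra.
apply: le_trans XY _.
rewrite /Yd (Rint_simple measurableT Pfin mE).
have -> : fine (P setT) = 1 by rewrite probability_setT.
rewrite mulr1.
have := ES_lower cap a01 m mX XM M0 e0.
have : \sum_(0 <= i < m) fine (P (lev X M e i `&` setT)) <=
       \sum_(0 <= i < m) (Num.min (w [set om | - M + (i.+1)%:R * e <= X om]) alpha / alpha).
  by apply: ler_sum => i _; exact: fine_core.
move=> h1 h2; have := ler_wpM2l (ltW e0) h1; lra.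
Qed.

Lemma H_dir (X : T -> R) : bdd_meas X -> exists Q : probability T R,
  (forall A, measurable A -> (Q A <= (w A / alpha)%:E)%E) /\
  (\int[Q]_x (X x)%:E = (ES w alpha X)%:E)%E.
Proof.
move=> BX.
have [l [ladd lsc lle lX]] := @hahn_banach T R bdd_meas (ES w alpha)
  (fun X Y hX hY => bdd_add hX hY) (fun a X hX => bdd_sc a hX)
  (fun X Y hX hY => p_add coh hX hY) (fun a X a0 hX => p_sc coh a0 hX) X BX.
pose Q := Probability.clone _ _ _ (lmu cw a01 coh ladd lsc lle) _.
have QE A : measurable A -> Q A = (Q0 l A)%:E.
  by move=> mA; exact: (lmuE cw a01 coh ladd lsc lle mA).
have core : forall A, measurable A -> (Q A <= (w A / alpha)%:E)%E.
  by move=> A mA; rewrite QE // lee_fin; exact: (Q0_le cw a01 lle mA).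
exists Q; split => //.
apply/le_anti/andP; split; first exact: E_dir.
have [M [M0 XM]] := bdd_M BX; have mX := BX.1.
have Pfin : (Q setT < +oo)%E by rewrite QE // (Q0_T coh lsc lle) ltry.
have iX : Q.-integrable setT (EFin \o X).
  apply: (@bint _ _ _ _ _ _ M) => // x _; rewrite ler_norml; exact: XM.
have fX := integrable_fin_num measurableT iX.
rewrite -(fineK fX) lee_fin; apply/ler_addgt0Pr => e e0.
have [m mM] := choose_m M0 e0.
have sw := sandwich XM e0 mM.
have mE i : measurable (lev X M e i) by exact: mlev.
have iY : Q.-integrable setT (EFin \o Ysum X M e m).
  apply: (@bint _ _ _ _ _ _ (`|- M| + e * m%:R)) => //.
    apply: measurable_funD; first exact: measurable_cst.
    apply: measurable_funM; first exact: measurable_cst.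
    exact: msum_indic.
  move=> x _; apply: le_trans (ler_normD _ _) _; rewrite lerD2l normrM.
  rewrite gtr0_norm //; have /andP[h1 h2] := sum_indic_bd R (lev X M e) m x.
  by rewrite ger0_norm // ler_wpM2l // ltW.
have fY := integrable_fin_num measurableT iY.
have YX : Rintegral Q setT (Ysum X M e m) <= fine (\int[Q]_x (X x)%:E).
  rewrite /Rintegral; apply: fine_le => //; apply: le_integral => // x _.
  rewrite lee_fin; have := sw x => /andP[h _]; exact: h.
have RY : Rintegral Q setT (Ysum X M e m) = l (Ysum X M e m).
  rewrite /Ysum (Rint_simple measurableT Pfin mE).
  rewrite (l_simple ladd lsc lle mE).
  have -> : fine (Q setT) = 1 by rewrite QE // (Q0_T coh lsc lle).
  rewrite mulr1; congr (_ + _ * _); apply: eq_bigr => i _.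
  rewrite setIT; transitivity (fine ((Q0 l (lev X M e i))%:E)); last by []. by congr fine; exact: QE.
have BY : bdd_meas (Ysum X M e m) by exact: bdd_simple.
have BZ : bdd_meas (addf X (sc (-1) (Ysum X M e m))).
  by apply: bdd_add => //; exact: bdd_sc.
have lZ : l (addf X (sc (-1) (Ysum X M e m))) <= e.
  apply: le_trans (lle _ BZ) _; rewrite -[Z0 in _ <= Z0](p_cst coh e).
  apply: (p_mono coh) => //; first exact: bdd_cst.
  by move=> t; rewrite /addf /sc; have := sw t => /andP[_ h]; lra.
have eX : X = addf (Ysum X M e m) (addf X (sc (-1) (Ysum X M e m))).
  by apply/funext => t; rewrite /addf /sc; lra.
rewrite {1}eX ladd // in lX.
lra.
Qed.

End Final2.

Unset Implicit Arguments. Set Strict Implicit.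

Theorem proposition10 (d : measure_display) (T : measurableType d) (R : realType)
  (w : set T -> R) (alpha : R) :
  continuous_capacity w -> 0 < alpha < 1 -> coherent (ES w alpha) ->
  forall X : T -> R, bdd_meas X ->
    ((ES w alpha X)%:E =
     ereal_sup [set e : \bar R | exists Q : probability T R,
        (forall A, measurable A -> Q A <= (w A / alpha)%:E)%E /\
        e = \int[Q]_x (X x)%:E])%E.
Proof.
move=> cw a01 coh X BX.
have [Q [hQ eQ]] := H_dir cw a01 coh BX.
apply/le_anti/andP; split.
  by rewrite -eQ; apply: ereal_sup_ubound; exists Q; split.
apply: ge_ereal_sup => _ [P [hP ->]]; exact: (E_dir cw a01 hP BX).
Qed.
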